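(* Let $S_j$ be local potentials satisfying (A)–(E) and let $K\subset\mathbb{R}^d$ be compact. There is, for every $n\in\mathbb{N}$, a constant $\delta_n>0$ depending only on $K$, $n$ (and the potentials) such that the following holds: if $x<y$ are two Birkhoff configurations with rotation vectors in $K$ that are both stationary, then for all $i,k\in\mathbb{Z}^d$, $$y_k-x_k\le\delta_{\|i-k\|}\,(y_i-x_i).$$ In particular, $x<y$ implies $x\ll y$.
   Context: Notation: $\|i\|=\sum_{k=1}^d|i_k|$, $B_j^r=\{k:\|k-j\|\le r\}$, $(\tau_{k,l}x)_i=x_{i+k}+l$. Local potentials $S_j:\mathbb{R}^{\mathbb{Z}^d}\to\mathbb{R}$, $j\in\mathbb{Z}^d$, satisfy: (A) there is $r\in(0,\infty)$ and $C^2$ functions $s_j:\mathbb{R}^{B_j^r}\to\mathbb{R}$ with $S_j(x)=s_j(x|_{B_j^r})$; (B) $S_j(\tau_{k,l}x)=S_{j+k}(x)$; (C) each $S_j$ is bounded below and $S_j(x)\to\infty$ as $|x_k-x_j|\to\infty$ whenever $\|k-j\|=1$; (D) $\partial_{i,k}S_j\le0$ for $i\ne k$, and $\partial_{i,k}S_i<0$ when $\|i-k\|=1$; (E) $|\partial_{i,k}S_j|\le C$ uniformly. Order: $x\le y$ iff $x_i\le y_i$ for all $i$; $x<y$ iff $x\le y$, $x\ne y$; $x\ll y$ iff $x_i<y_i$ for all $i$. Birkhoff: for every $(k,l)$, $\tau_{k,l}x\ge x$ or $\tau_{k,l}x\le x$. Rotation vector $\omega$: $\lim_n x_{ni}/n=\langle\omega,i\rangle$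 for all $i$. A configuration $x$ is stationary if $\sum_{\|j-i\|\le r}\partial_iS_j(x)=0$ for all $i\in\mathbb{Z}^d$. *)

(* Defs.v *)
From Stdlib Require Import Reals ZArith List.
From Stdlib Require Vector VectorEq.
Open Scope R_scope.

Definition Pt (d : nat) : Type := Vector.t Z d.
Definition Config (d : nat) : Type := Pt d -> R.

Definition pt_eq_dec {d : nat} (u v : Pt d) : {u = v} + {u <> v} :=
  VectorEq.eq_dec Z Z.eqb Z.eqb_eq d u v.

Definition padd {d : nat} (u v : Pt d) : Pt d := Vector.map2 Z.add u v.
Definition psub {d : nat} (u v : Pt d) : Pt d := Vector.map2 Z.sub u v.
Definition pscale {d : nat} (n : nat) (u : Pt d) : Pt d :=
  Vector.map (Z.mul (Z.of_nat n)) u.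

Definition norm1 {d : nat} (u : Pt d) : Z :=
  Vector.fold_right (fun a s => (Z.abs a + s)%Z) u 0%Z.

Definition inBall {d : nat} (r : R) (j k : Pt d) : Prop :=
  IZR (norm1 (psub k j)) <= r.

Definition dotRZ {d : nat} (w : Vector.t R d) (i : Pt d) : R :=
  Vector.fold_right (fun a s => a + s) (Vector.map2 (fun a b => a * IZR b) w i) 0.

Definition tau {d : nat} (k : Pt d) (l : Z) (x : Config d) : Config d :=
  fun i => x (padd i k) + IZR l.

Definition upd {d : nat} (x : Config d) (i : Pt d) (t : R) : Config d :=
  fun k => if pt_eq_dec k i then x k + t else x k.

Definition IsPartial {d : nat} (F : Config d -> R) (i : Pt d) (DF : Config d -> R) : Prop :=
  forall x, derivable_pt_lim (fun t => F (upd x i t)) 0 (DF x).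

Definition LocalTo {d : nat} (r : R) (j : Pt d) (F : Config d -> R) : Prop :=
  forall x y : Config d, (forall k, inBall r j k -> x k = y k) -> F x = F y.

Definition ContLocal {d : nat} (r : R) (j : Pt d) (F : Config d -> R) : Prop :=
  forall x eps, 0 < eps -> exists delta, 0 < delta /\
    forall y : Config d, (forall k, inBall r j k -> Rabs (y k - x k) < delta) ->
      Rabs (F y - F x) < eps.

(** Standing assumptions (A)-(E) on the local potentials S_j.
    dS j i = d_i S_j,  ddS j i k = d_k d_i S_j  (= d_{i,k} S_j). *)
Definition LocalPotentials {d : nat} (r : R) (S : Pt d -> Config d -> R)
    (dS : Pt d -> Pt d -> Config d -> R) (ddS : Pt d -> Pt d -> Pt d -> Config d -> R) : Prop :=
  (* (A) *)
  0 < r /\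
  (forall j, LocalTo r j (S j)) /\
  (forall j i, IsPartial (S j) i (dS j i)) /\
  (forall j i k, IsPartial (dS j i) k (ddS j i k)) /\
  (forall j i k, ContLocal r j (ddS j i k)) /\
  (* (B) *)
  (forall j k l x, S j (tau k l x) = S (padd j k) x) /\
  (* (C) *)
  (forall j, exists m, forall x, m <= S j x) /\
  (forall j k, norm1 (psub k j) = 1%Z ->
     forall M, exists Rad, forall x, Rad < Rabs (x k - x j) -> M < S j x) /\
  (* (D) *)
  (forall j i k x, i <> k -> ddS j i k x <= 0) /\
  (forall i k x, norm1 (psub i k) = 1%Z -> ddS i i k x < 0) /\
  (* (E) *)
  (exists C, forall j i k x, Rabs (ddS j i k x) <= C).

Definition cle {d : nat} (x y : Config d) : Prop := forall i, x i <= y i.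
Definition clt {d : nat} (x y : Config d) : Prop := cle x y /\ x <> y.
Definition cll {d : nat} (x y : Config d) : Prop := forall i, x i < y i.

Definition Birkhoff {d : nat} (x : Config d) : Prop :=
  forall k l, cle x (tau k l x) \/ cle (tau k l x) x.

Definition RotationVector {d : nat} (x : Config d) (w : Vector.t R d) : Prop :=
  forall i, Un_cv (fun n => x (pscale n i) / INR n) (dotRZ w i).

(** sum_{||j - i|| <= r} d_i S_j (x) = 0 for all i; the finite sum is taken over
    any duplicate-free enumeration L of the ball B_i^r. *)
Definition Stationary {d : nat} (r : R) (dS : Pt d -> Pt d -> Config d -> R) (x : Config d) : Prop :=
  forall i (L : list (Pt d)), NoDup L -> (forall j, In j L <-> inBall r i j) ->
    fold_right Rplus 0 (map (fun j => dS j i x) L) = 0.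

Definition OpenRd {d : nat} (U : Vector.t R d -> Prop) : Prop :=
  forall w, U w -> exists e, 0 < e /\
    forall v, (forall m : Fin.t d, Rabs (Vector.nth v m - Vector.nth w m) < e) -> U v.

Definition CompactRd {d : nat} (K : Vector.t R d -> Prop) : Prop :=
  forall (I : Type) (U : I -> Vector.t R d -> Prop),
    (forall a, OpenRd (U a)) ->
    (forall w, K w -> exists a, U a w) ->
    exists F : list I, forall w, K w -> exists a, In a F /\ U a w.

(* Main.v *)
Require Import Defs.
From Stdlib Require Import Reals ZArith List Lra Lia FinFun.
From Stdlib Require Vector VectorEq.
From Stdlib Require Import Classical ClassicalEpsilon FunctionalExtensionality.
Open Scope R_scope.

Section Vec.
Context {d : nat}.
Definition pzero : Pt d := Vector.const 0%Z d.

Ltac vext := apply Vector.eq_nth_iff; intros p ? <-;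
  repeat first [rewrite (Vector.nth_map2 _ _ _ p p p eq_refl eq_refl)
    | rewrite (Vector.nth_map _ _ p p eq_refl) | rewrite Vector.const_nth].

Lemma psub_padd_l (i u : Pt d) : psub (padd i u) i = u.
Proof. unfold psub, padd; vext; lia. Qed.
Lemma padd_psub_l (i j : Pt d) : padd i (psub j i) = j.
Proof. unfold psub, padd; vext; lia. Qed.
Lemma psub_padd_r (q i : Pt d) : psub (padd q i) i = q.
Proof. unfold psub, padd; vext; lia. Qed.
Lemma padd_psub_r (m i : Pt d) : padd (psub m i) i = m.
Proof. unfold psub, padd; vext; lia. Qed.
Lemma padd_zero_l (i : Pt d) : padd pzero i = i.
Proof. unfold pzero, padd; vext; lia. Qed.
Lemma psub_zero_r (i : Pt d) : psub i pzero = i.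
Proof. unfold pzero, psub; vext; lia. Qed.
Lemma psub_diag (i : Pt d) : psub i i = pzero.
Proof. unfold pzero, psub; vext; lia. Qed.
Lemma psub_zero_psub (i k : Pt d) : psub pzero (psub k i) = psub i k.
Proof. unfold pzero, psub; vext; lia. Qed.
Lemma pscale_S (n : nat) (m : Pt d) : pscale (S n) m = padd (pscale n m) m.
Proof. unfold pscale, padd; vext; lia. Qed.
End Vec.

Lemma norm1_nil : norm1 (Vector.nil Z) = 0%Z.
Proof. reflexivity. Qed.
Lemma norm1_cons {n} (h : Z) (v : Pt n) : norm1 (Vector.cons Z h n v) = (Z.abs h + norm1 v)%Z.
Proof. reflexivity. Qed.

Lemma norm1_nonneg {d} (v : Pt d) : (0 <= norm1 v)%Z.
Proof. induction v; [cbn; lia| rewrite norm1_cons; lia]. Qed.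

Lemma norm1_tri {d} (a b c : Pt d) :
  (norm1 (psub a c) <= norm1 (psub a b) + norm1 (psub b c))%Z.
Proof.
  revert b c; induction a as [|h n a IH]; intros b c.
  - pattern b; apply Vector.case0; pattern c; apply Vector.case0; cbn; lia.
  - rewrite (Vector.eta b), (Vector.eta c).
    unfold psub in *; simpl. rewrite !norm1_cons. specialize (IH (Vector.tl b) (Vector.tl c)). lia.
Qed.

Lemma norm1_sym {d} (a b : Pt d) : norm1 (psub a b) = norm1 (psub b a).
Proof.
  revert b; induction a as [|h n a IH]; intros b.
  - pattern b; apply Vector.case0; reflexivity.
  - rewrite (Vector.eta b).
    unfold psub in *; simpl. rewrite !norm1_cons. rewrite IH. f_equal. lia.
Qed.

Lemma norm1_zero_eq {d} (a b : Pt d) : norm1 (psub a b) = 0%Z -> a = b.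
Proof.
  revert b; induction a as [|h n a IH]; intros b.
  - pattern b; apply Vector.case0; reflexivity.
  - rewrite (Vector.eta b). generalize (Vector.hd b) (Vector.tl b); clear b; intros hb b.
    unfold psub in *; simpl. rewrite !norm1_cons. intro H.
    pose proof (norm1_nonneg (Vector.map2 Z.sub a b)).
    assert (h = hb) by lia. subst. f_equal. apply IH. lia.
Qed.

Lemma norm1_diag {d} (a : Pt d) : norm1 (psub a a) = 0%Z.
Proof. induction a; [reflexivity|]. unfold psub in *; simpl; rewrite norm1_cons, IHa. lia. Qed.

Lemma norm1_step {d} (i k : Pt d) (n : nat) : norm1 (psub i k) = Z.of_nat (S n) ->
  exists i', norm1 (psub i i') = 1%Z /\ norm1 (psub i' k) = Z.of_nat n.
Proof.
  revert k n. induction i as [|h m i IH]; intros k n.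
  - pattern k; apply Vector.case0; cbn; lia.
  - rewrite (Vector.eta k). generalize (Vector.hd k) (Vector.tl k); clear k; intros hk k.
    unfold psub in *; simpl. rewrite !norm1_cons. intro H.
    destruct (Z.eq_dec h hk) as [->|Hne].
    + rewrite Z.sub_diag in H; simpl in H. destruct (IH k n H) as [i' [H1 H2]].
      exists (Vector.cons Z hk m i'). simpl; rewrite !norm1_cons, Z.sub_diag. simpl. lia.
    + exists (Vector.cons Z (h - Z.sgn (h - hk))%Z m i). simpl; rewrite !norm1_cons.
      pose proof (norm1_diag i) as Hd. unfold psub in Hd. rewrite Hd.
      destruct (Z.lt_total h hk) as [Hl|[Hl|Hl]]; [|lia|].
      * rewrite (Z.sgn_neg (h - hk)) by lia. split; [lia|].
        pose proof (norm1_nonneg (Vector.map2 Z.sub i k)). lia.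
      * rewrite (Z.sgn_pos (h - hk)) by lia. split; [lia|].
        pose proof (norm1_nonneg (Vector.map2 Z.sub i k)). lia.
Qed.

Definition zrange (M : nat) : list Z :=
  map (fun n => (Z.of_nat n - Z.of_nat M)%Z) (seq 0 (2 * M + 1)).

Lemma zrange_in (M : nat) (a : Z) : (Z.abs a <= Z.of_nat M)%Z -> In a (zrange M).
Proof.
  intro H. unfold zrange. apply in_map_iff.
  exists (Z.to_nat (a + Z.of_nat M)). split.
  - rewrite Z2Nat.id; lia.
  - apply in_seq. lia.
Qed.

Fixpoint boxvec (d : nat) (M : nat) : list (Pt d) :=
  match d with
  | O => Vector.nil Z :: nil
  | S d' => flat_map (fun a => map (fun v => Vector.cons Z a d' v) (boxvec d' M)) (zrange M)
  end.

Lemma boxvec_complete (d M : nat) (v : Pt d) : (norm1 v <= Z.of_nat M)%Z -> In v (boxvec d M).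
Proof.
  induction v as [|h n v IH].
  - intros _. simpl. left. reflexivity.
  - rewrite norm1_cons. intro H. pose proof (norm1_nonneg v). simpl.
    apply in_flat_map. exists h. split.
    + apply zrange_in. lia.
    + apply in_map. apply IH. lia.
Qed.

Definition offs {d : nat} (Rr : R) : list (Pt d) :=
  nodup pt_eq_dec
   (filter (fun u => if Rle_dec (IZR (norm1 u)) Rr then true else false)
      (boxvec d (Z.to_nat (up Rr)))).

Definition ball_enum {d : nat} (Rr : R) (i : Pt d) : list (Pt d) := map (padd i) (offs Rr).

Lemma ball_enum_nodup {d} Rr (i : Pt d) : NoDup (ball_enum Rr i).
Proof.
  apply Injective_map_NoDup; [|apply NoDup_nodup].
  intros u v H. rewrite <- (psub_padd_l i u), <- (psub_padd_l i v), H. reflexivity.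
Qed.

Lemma ball_enum_spec {d} Rr (i j : Pt d) : In j (ball_enum Rr i) <-> inBall Rr i j.
Proof.
  unfold ball_enum, offs, inBall. split.
  - intro H. apply in_map_iff in H. destruct H as [u [<- Hu]].
    apply nodup_In, filter_In in Hu. destruct Hu as [_ Hu].
    rewrite psub_padd_l. destruct (Rle_dec _ _); [assumption|discriminate].
  - intro H. apply in_map_iff. exists (psub j i). split; [apply padd_psub_l|].
    apply nodup_In, filter_In. split.
    + apply boxvec_complete. destruct (archimed Rr) as [H1 _].
      assert (IZR (norm1 (psub j i)) < IZR (up Rr)) as H2 by lra.
      apply lt_IZR in H2. pose proof (norm1_nonneg (psub j i)). rewrite Z2Nat.id; lia.
    + destruct (Rle_dec _ _); [reflexivity|contradiction].
Qed.

Lemma ball_enum_length {d} Rr (i i' : Pt d) : length (ball_enum Rr i) = length (ball_enum Rr i').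
Proof. unfold ball_enum. rewrite !length_map. reflexivity. Qed.

Definition lsum {A : Type} (f : A -> R) (L : list A) : R := fold_right Rplus 0 (map f L).

Lemma lsum_plus {A} (f g : A -> R) L : lsum (fun a => f a + g a) L = lsum f L + lsum g L.
Proof. induction L; unfold lsum in *; simpl; [lra|]. rewrite IHL. lra. Qed.
Lemma lsum_minus {A} (f g : A -> R) L : lsum (fun a => f a - g a) L = lsum f L - lsum g L.
Proof. induction L; unfold lsum in *; simpl; [lra|]. rewrite IHL. lra. Qed.
Lemma lsum_scal {A} (c : R) (f : A -> R) L : lsum (fun a => c * f a) L = c * lsum f L.
Proof. induction L; unfold lsum in *; simpl; [lra|]. rewrite IHL. lra. Qed.
Lemma lsum_le {A} (f g : A -> R) L : (forall a, In a L -> f a <= g a) -> lsum f L <= lsum g L.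
Proof. induction L; unfold lsum in *; simpl; intros H; [lra|].
  pose proof (H a (or_introl eq_refl)). pose proof (IHL (fun b Hb => H b (or_intror Hb))). lra. Qed.
Lemma lsum_ext {A} (f g : A -> R) L : (forall a, In a L -> f a = g a) -> lsum f L = lsum g L.
Proof. intro H. apply Rle_antisym; apply lsum_le; intros a Ha; rewrite (H a Ha); lra. Qed.
Lemma lsum_const {A} (c : R) (L : list A) : lsum (fun _ => c) L = INR (length L) * c.
Proof. induction L; unfold lsum in *; cbn [map fold_right length]; [simpl; lra|]. rewrite IHL. rewrite S_INR. lra. Qed.
Lemma lsum_ind0 {d} (a : Pt d) (v : R) L : ~ In a L ->
  lsum (fun m => if pt_eq_dec m a then v else 0) L = 0.
Proof.
  induction L as [|b L IH]; intros Hi; unfold lsum in *; simpl; [reflexivity|].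
  destruct (pt_eq_dec b a) as [->|]; [exfalso; apply Hi; left; auto|].
  rewrite IH; [lra| intro; apply Hi; right; auto].
Qed.
Lemma lsum_ind {d} (a : Pt d) (v : R) L : NoDup L -> In a L ->
  lsum (fun m => if pt_eq_dec m a then v else 0) L = v.
Proof.
  induction L as [|b L IH]; intros Hn Hi; [destruct Hi|]. inversion Hn; subst.
  pose proof (lsum_ind0 a v L) as H0.
  unfold lsum in *; simpl. destruct Hi as [->|Hi].
  - destruct (pt_eq_dec a a) as [_|]; [|congruence]. rewrite H0; auto. lra.
  - destruct (pt_eq_dec b a) as [->|]; [contradiction|]. rewrite IH; auto. lra.
Qed.

Section Calc.
Context {d : nat}.

Lemma upd_upd (x : Config d) a s t : upd (upd x a s) a t = upd x a (s + t).
Proof. apply functional_extensionality; intro q; unfold upd.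
  destruct (pt_eq_dec q a); lra. Qed.
Lemma upd_0 (x : Config d) a : upd x a 0 = x.
Proof. apply functional_extensionality; intro q; unfold upd.
  destruct (pt_eq_dec q a); lra. Qed.

Lemma deriv_shift (f : R -> R) t0 l :
  derivable_pt_lim (fun s => f (t0 + s)) 0 l -> derivable_pt_lim f t0 l.
Proof.
  intros H eps He. destruct (H eps He) as [del Hd]. exists del. intros h Hh Hh2.
  specialize (Hd h Hh Hh2). rewrite !Rplus_0_l, Rplus_0_r in Hd. exact Hd.
Qed.

Lemma partial_everywhere (G : Config d -> R) a dG : IsPartial G a dG ->
  forall h t0, derivable_pt_lim (fun t => G (upd h a t)) t0 (dG (upd h a t0)).
Proof.
  intros HP h t0. apply deriv_shift. specialize (HP (upd h a t0)).
  assert ((fun s => G (upd h a (t0 + s))) = (fun t => G (upd (upd h a t0) a t))) as ->; [|exact HP].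
  apply functional_extensionality; intro s. rewrite upd_upd. reflexivity.
Qed.

Lemma mvt_step (G : Config d -> R) a dG : IsPartial G a dG ->
  forall h del, 0 <= del -> exists th, 0 <= th <= del /\
    G (upd h a del) - G h = dG (upd h a th) * del.
Proof.
  intros HP h del Hd. destruct (Req_dec del 0) as [->|Hne].
  - exists 0. rewrite upd_0. split; [lra|ring].
  - destruct (MVT_cor2 (fun t => G (upd h a t)) (fun t => dG (upd h a t)) 0 del) as [c [Hc1 Hc2]].
    + lra.
    + intros c _. apply partial_everywhere; exact HP.
    + exists c. split; [lra|]. simpl in Hc1. rewrite upd_0 in Hc1. rewrite Hc1. ring.
Qed.

Lemma partial_local Rr j (G : Config d -> R) i DG : LocalTo Rr j G -> IsPartial G i DG -> LocalTo Rr j DG.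
Proof.
  intros HL HP x y Hxy. apply (uniqueness_limite (fun t => G (upd x i t)) 0); [apply HP|].
  assert ((fun t => G (upd x i t)) = (fun t => G (upd y i t))) as ->; [|apply HP].
  apply functional_extensionality; intro t. apply HL. intros k Hk. unfold upd.
  rewrite (Hxy k Hk). reflexivity.
Qed.

Lemma tau_upd (c : Pt d) l (x : Config d) m t : tau c l (upd x m t) = upd (tau c l x) (psub m c) t.
Proof.
  apply functional_extensionality; intro q; unfold tau, upd.
  destruct (pt_eq_dec (padd q c) m) as [H|H]; destruct (pt_eq_dec q (psub m c)) as [H'|H'].
  - lra.
  - exfalso. apply H'. rewrite <- H. symmetry. apply psub_padd_r.
  - exfalso. apply H. rewrite H'. apply padd_psub_r.
  - lra.
Qed.

Lemma partial_tau (F G : Config d -> R) c l m DF DG :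
  (forall x, F x = G (tau c l x)) -> IsPartial G (psub m c) DG -> IsPartial F m DF ->
  forall x, DF x = DG (tau c l x).
Proof.
  intros HFG HG HF x. apply (uniqueness_limite (fun t => F (upd x m t)) 0); [apply HF|].
  assert ((fun t => F (upd x m t)) = (fun t => G (upd (tau c l x) (psub m c) t))) as ->; [|apply HG].
  apply functional_extensionality; intro t. rewrite HFG, tau_upd. reflexivity.
Qed.

Definition hyb (L : list (Pt d)) (z z' : Config d) : Config d :=
  fun q => if in_dec pt_eq_dec q L then z' q else z q.

Lemma hyb_cons a L z z' : ~ In a L -> hyb (a :: L) z z' = upd (hyb L z z') a (z' a - z a).
Proof.
  intro Ha. apply functional_extensionality; intro q. unfold hyb, upd.
  destruct (pt_eq_dec q a) as [->|Hq].
  - destruct (in_dec pt_eq_dec a (a :: L)) as [_|H]; [|exfalso; apply H; left; auto].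
    destruct (in_dec pt_eq_dec a L); [contradiction|]. ring.
  - destruct (in_dec pt_eq_dec q (a :: L)) as [H|H]; destruct (in_dec pt_eq_dec q L) as [H'|H'].
    + reflexivity.
    + destruct H as [->|H]; [congruence|contradiction].
    + exfalso; apply H; right; auto.
    + reflexivity.
Qed.

Lemma hyb_nil z z' : hyb nil z z' = z.
Proof. apply functional_extensionality; intro q. reflexivity. Qed.

Lemma mvt_list (G : Config d -> R) (dG : Pt d -> Config d -> R)
  (HP : forall m, IsPartial G m (dG m)) (L : list (Pt d)) (z z' : Config d) (U : Pt d -> R) :
  NoDup L -> cle z z' ->
  (forall m xi, In m L -> cle z xi -> cle xi z' -> dG m xi * (z' m - z m) <= U m) ->
  G (hyb L z z') - G z <= lsum U L.
Proof.
  intros Hn Hzz. induction L as [|a L IH]; intros HU.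
  - rewrite hyb_nil. unfold lsum; simpl. lra.
  - inversion Hn; subst. rewrite hyb_cons by assumption.
    destruct (mvt_step G a (dG a) (HP a) (hyb L z z') (z' a - z a)) as [th [Hth Heq]].
    { specialize (Hzz a). lra. }
    assert (dG a (upd (hyb L z z') a th) * (z' a - z a) <= U a).
    { apply HU; [left; auto| |]; intro q; unfold upd, hyb; specialize (Hzz q);
      destruct (pt_eq_dec q a) as [->|]; destruct (in_dec pt_eq_dec _ L); try contradiction; lra. }
    pose proof (IH H2 (fun m xi Hm => HU m xi (or_intror Hm))).
    unfold lsum in *; simpl. lra.
Qed.

End Calc.

Lemma rabs_le_inv a b : Rabs a <= b -> -b <= a <= b.
Proof. unfold Rabs; destruct (Rcase_abs a); lra. Qed.
Lemma rabs_lt_inv a b : Rabs a < b -> -b < a < b.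
Proof. unfold Rabs; destruct (Rcase_abs a); lra. Qed.

Lemma inv_small (eps : R) : 0 < eps -> exists N : nat, / (INR N + 1) < eps.
Proof.
  intro He. destruct (archimed (/ eps)) as [H1 _].
  assert (0 < / eps) by (apply Rinv_0_lt_compat; lra).
  exists (Z.to_nat (up (/ eps))).
  assert (IZR (up (/eps)) > 0) by lra. apply lt_0_IZR in H0 as H2.
  rewrite INR_IZR_INZ, Z2Nat.id by lia.
  rewrite <- (Rinv_inv eps) at 2. apply Rinv_lt_contravar; [|lra].
  apply Rmult_lt_0_compat; lra.
Qed.

Lemma inv_mono (n m : nat) : (n <= m)%nat -> / (INR m + 1) <= / (INR n + 1).
Proof. intro H. apply le_INR in H. pose proof (pos_INR n).
  apply Rinv_le_contravar; lra. Qed.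

Lemma incr_ge (phi : nat -> nat) : (forall n, (phi n < phi (S n))%nat) -> forall n, (n <= phi n)%nat.
Proof. intros H n; induction n; [lia|]. specialize (H n). lia. Qed.

Lemma incr_mono (phi : nat -> nat) : (forall n, (phi n < phi (S n))%nat) ->
  forall n m, (n <= m)%nat -> (phi n <= phi m)%nat.
Proof. intros H n m Hnm; induction Hnm; [lia|]. specialize (H m). lia. Qed.

Lemma subseq_cv (u : nat -> R) l (phi : nat -> nat) :
  (forall n, (phi n < phi (S n))%nat) -> Un_cv u l -> Un_cv (fun n => u (phi n)) l.
Proof.
  intros Hp Hu eps He. destruct (Hu eps He) as [N HN]. exists N. intros n Hn.
  apply HN. pose proof (incr_ge phi Hp n). lia.
Qed.

Lemma bw1 (t : nat -> R) (M : R) : (forall n, Rabs (t n) <= M) ->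
  exists (psi : nat -> nat) (l : R), (forall n, (psi n < psi (S n))%nat) /\ Un_cv (fun n => t (psi n)) l.
Proof.
  intro Hb.
  destruct (Bolzano_Weierstrass t (fun c => -M <= c <= M) (compact_P3 (-M) M)) as [l Hl].
  { intro n. specialize (Hb n). apply rabs_le_inv in Hb. exact Hb. }
  assert (H : forall (N n : nat), exists p, (N <= p)%nat /\ Rabs (t p - l) < / (INR n + 1)).
  { intros N n. assert (Hpos : 0 < / (INR n + 1)) by (apply Rinv_0_lt_compat; pose proof (pos_INR n); lra).
    destruct (Hl (fun c => Rabs (c - l) < / (INR n + 1)) N) as [p Hp].
    - exists (mkposreal _ Hpos). intros y Hy. exact Hy.
    - exists p; exact Hp. }
  set (g := fun N n => proj1_sig (constructive_indefinite_description _ (H N n))).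
  assert (Hg : forall N n, (N <= g N n)%nat /\ Rabs (t (g N n) - l) < / (INR n + 1)).
  { intros N n. unfold g. destruct (constructive_indefinite_description _ _) as [p Hp]. exact Hp. }
  set (psi := nat_rect (fun _ => nat) (g 0%nat 0%nat) (fun n p => g (S p) (S n))).
  assert (Hps : forall n, Rabs (t (psi n) - l) < / (INR n + 1)).
  { intro n; destruct n; simpl; apply Hg. }
  exists psi, l. split.
  - intro n. simpl. pose proof (proj1 (Hg (S (psi n)) (S n))). lia.
  - intros eps He. destruct (inv_small eps He) as [N HN]. exists N. intros n Hn.
    unfold R_dist. specialize (Hps n). apply rabs_lt_inv in Hps. apply Rabs_def1; pose proof (inv_mono N n Hn); lra.
Qed.

Lemma seq_compact {d} (L : list (Pt d)) (M : R) (z : nat -> Config d) :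
  (forall n m, In m L -> Rabs (z n m) <= M) ->
  exists (phi : nat -> nat) (zs : Config d), (forall n, (phi n < phi (S n))%nat) /\
    forall m, In m L -> Un_cv (fun n => z (phi n) m) (zs m).
Proof.
  induction L as [|a L IH]; intro Hb.
  - exists (fun n => n), (fun _ => 0). split; [intro; lia| intros m []].
  - destruct (IH (fun n m Hm => Hb n m (or_intror Hm))) as [phi [zs [Hp Hc]]].
    destruct (bw1 (fun n => z (phi n) a) M) as [psi [l [Hq Hl]]].
    { intro n. apply Hb. left; auto. }
    exists (fun n => phi (psi n)), (fun q => if pt_eq_dec q a then l else zs q). split.
    + intro n. specialize (Hq n). pose proof (incr_mono phi Hp (S (psi n)) (psi (S n)) Hq).
      specialize (Hp (psi n)). lia.
    + intros m Hm. destruct (pt_eq_dec m a) as [->|Hne]; [exact Hl|].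
      destruct Hm as [->|Hm]; [congruence|].
      apply (subseq_cv (fun n => z (phi n) m) (zs m) psi Hq (Hc m Hm)).
Qed.

Lemma cv_list {d} (L : list (Pt d)) (u : nat -> Config d) (zs : Config d) :
  (forall m, In m L -> Un_cv (fun n => u n m) (zs m)) ->
  forall del, 0 < del -> exists N, forall n, (N <= n)%nat -> forall m, In m L -> Rabs (u n m - zs m) < del.
Proof.
  intros H del Hd. induction L as [|a L IH].
  - exists 0%nat. intros n _ m [].
  - destruct (IH (fun m Hm => H m (or_intror Hm))) as [N1 HN1].
    destruct (H a (or_introl eq_refl) del Hd) as [N2 HN2].
    exists (Nat.max N1 N2). intros n Hn m [<-|Hm].
    + apply HN2. lia.
    + apply HN1; [lia|auto].
Qed.

Lemma neg_bound {d} (L : list (Pt d)) (M : R) (F : Config d -> R) :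
  (forall x eps, 0 < eps -> exists del, 0 < del /\
     forall y, (forall k, In k L -> Rabs (y k - x k) < del) -> Rabs (F y - F x) < eps) ->
  (forall z, F z < 0) ->
  exists c, 0 < c /\ forall z, (forall m, In m L -> Rabs (z m) <= M) -> F z <= - c.
Proof.
  intros Hc Hneg. apply NNPP. intro Hno.
  assert (H : forall n : nat, exists z, (forall m, In m L -> Rabs (z m) <= M) /\ - / (INR n + 1) < F z).
  { intro n. apply NNPP. intro Hn. apply Hno. exists (/ (INR n + 1)). split.
    - apply Rinv_0_lt_compat. pose proof (pos_INR n). lra.
    - intros z Hz. apply Rnot_lt_le. intro Hlt. apply Hn. exists z. auto. }
  set (zq := fun n => proj1_sig (constructive_indefinite_description _ (H n))).
  assert (Hzq : forall n, (forall m, In m L -> Rabs (zq n m) <= M) /\ - / (INR n + 1) < F (zq n)).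
  { intro n. unfold zq. destruct (constructive_indefinite_description _ _) as [p Hp]. exact Hp. }
  destruct (seq_compact L M zq (fun n m Hm => proj1 (Hzq n) m Hm)) as [phi [zs [Hp Hcv]]].
  pose proof (Hneg zs) as Hzs.
  destruct (Hc zs (- F zs / 2) ltac:(lra)) as [del [Hd Hdel]].
  destruct (cv_list L (fun n => zq (phi n)) zs Hcv del Hd) as [N1 HN1].
  destruct (inv_small (- F zs / 2) ltac:(lra)) as [N2 HN2].
  set (n := Nat.max N1 N2).
  specialize (Hdel (zq (phi n)) (HN1 n ltac:(lia))).
  pose proof (proj2 (Hzq (phi n))).
  pose proof (inv_mono N2 (phi n) ltac:(pose proof (incr_ge phi Hp n); lia)).
  apply rabs_lt_inv in Hdel. lra.
Qed.

Definition maxnorm {n} (w : Vector.t R n) : R := Vector.fold_right (fun a s => Rmax (Rabs a) s) w 0.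

Lemma maxnorm_cons {n} a (w : Vector.t R n) : maxnorm (Vector.cons R a n w) = Rmax (Rabs a) (maxnorm w).
Proof. reflexivity. Qed.

Lemma maxnorm_nonneg {n} (w : Vector.t R n) : 0 <= maxnorm w.
Proof. induction w; [cbn; lra|]. rewrite maxnorm_cons. pose proof (Rmax_r (Rabs h) (maxnorm w)). lra. Qed.

Lemma maxnorm_open {n} (v w : Vector.t R n) e : 0 < e ->
  (forall m : Fin.t n, Rabs (Vector.nth v m - Vector.nth w m) < e) -> maxnorm v < maxnorm w + e.
Proof.
  intro He. revert w; induction v as [|a n v IH]; intros w Hm.
  - rewrite (Vector.case0 (fun w => w = Vector.nil R) eq_refl w). cbn. lra.
  - rewrite (Vector.eta w) in *. rewrite !maxnorm_cons.
    pose proof (Hm Fin.F1) as H1. simpl in H1.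
    assert (IHv : maxnorm v < maxnorm (Vector.tl w) + e).
    { apply IH. intro p. exact (Hm (Fin.FS p)). }
    pose proof (Rabs_triang (a - Vector.hd w) (Vector.hd w)) as Ht.
    replace (a - Vector.hd w + Vector.hd w) with a in Ht by ring.
    pose proof (Rmax_l (Rabs (Vector.hd w)) (maxnorm (Vector.tl w))).
    pose proof (Rmax_r (Rabs (Vector.hd w)) (maxnorm (Vector.tl w))).
    apply Rmax_lub_lt; lra.
Qed.

Lemma K_bounded {d} (K : Vector.t R d -> Prop) : CompactRd K ->
  exists B, 0 <= B /\ forall w, K w -> maxnorm w <= B.
Proof.
  intro HK. destruct (HK nat (fun n w => maxnorm w < INR n)) as [F HF].
  - intros n w Hw. exists (INR n - maxnorm w). split; [lra|].
    intros v Hv. pose proof (maxnorm_open v w (INR n - maxnorm w) ltac:(lra) Hv). lra.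
  - intros w _. destruct (archimed (maxnorm w)) as [H1 _]. pose proof (maxnorm_nonneg w).
    exists (Z.to_nat (up (maxnorm w))). rewrite INR_IZR_INZ, Z2Nat.id; [lra|].
    apply le_IZR. lra.
  - exists (fold_right (fun n s => Rmax (INR n) s) 0 F). split.
    + clear HF. induction F; simpl; [lra|]. pose proof (Rmax_r (INR a) (fold_right (fun n s => Rmax (INR n) s) 0 F)). lra.
    + intros w Hw. destruct (HF w Hw) as [a [Ha Hlt]].
      assert (INR a <= fold_right (fun n s => Rmax (INR n) s) 0 F); [|lra].
      clear HF Hlt. induction F as [|b F IHF]; [destruct Ha|]. destruct Ha as [->|Ha]; simpl.
      * apply Rmax_l.
      * specialize (IHF Ha). pose proof (Rmax_r (INR b) (fold_right (fun n s => Rmax (INR n) s) 0 F)). lra.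
Qed.

Lemma dotRZ_bound {d} (w : Vector.t R d) (u : Pt d) : Rabs (dotRZ w u) <= maxnorm w * IZR (norm1 u).
Proof.
  revert w; induction u as [|b n u IH]; intro w.
  - rewrite (Vector.case0 (fun w => w = Vector.nil R) eq_refl w). cbn. rewrite Rabs_R0. lra.
  - rewrite (Vector.eta w). unfold dotRZ in *. simpl. rewrite maxnorm_cons, norm1_cons, plus_IZR.
    specialize (IH (Vector.tl w)).
    pose proof (Rabs_triang (Vector.hd w * IZR b)
       (Vector.fold_right (fun a s => a + s) (Vector.map2 (fun a b => a * IZR b) (Vector.tl w) u) 0)) as H.
    rewrite Rabs_mult, <- abs_IZR in H.
    pose proof (Rmax_l (Rabs (Vector.hd w)) (maxnorm (Vector.tl w))).
    pose proof (Rmax_r (Rabs (Vector.hd w)) (maxnorm (Vector.tl w))).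
    pose proof (norm1_nonneg u) as Hu. apply IZR_le in Hu.
    assert (0 <= IZR (Z.abs b)) by (apply IZR_le; lia).
    pose proof (Rabs_pos (Vector.hd w)).
    pose proof (maxnorm_nonneg (Vector.tl w)).
    assert (Rabs (Vector.hd w) * IZR (Z.abs b) <= Rmax (Rabs (Vector.hd w)) (maxnorm (Vector.tl w)) * IZR (Z.abs b))
      by (apply Rmult_le_compat_r; lra).
    assert (maxnorm (Vector.tl w) * IZR (norm1 u) <= Rmax (Rabs (Vector.hd w)) (maxnorm (Vector.tl w)) * IZR (norm1 u))
      by (apply Rmult_le_compat_r; lra).
    lra.
Qed.

Lemma birk_diff {d} (x : Config d) : Birkhoff x -> forall m q q',
  (x (padd q m) - x q) - (x (padd q' m) - x q') <= 1.
Proof.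
  intros HB m q q'. apply Rnot_lt_le. intro Hc.
  set (l := up (- (x (padd q m) - x q))). destruct (archimed (- (x (padd q m) - x q))) as [H1 H2].
  fold l in H1, H2.
  destruct (HB m l) as [H|H].
  - specialize (H q'). unfold tau in H. lra.
  - specialize (H q). unfold tau in H. lra.
Qed.

Lemma lim_upper (u : nat -> R) L c A : Un_cv (fun n => u n / INR n) L ->
  (forall n, u n <= c + INR n * A) -> L <= A.
Proof.
  intros Hcv Hu. apply Rnot_lt_le. intro HLA. set (eps := (L - A) / 2).
  assert (He : 0 < eps) by (unfold eps; lra).
  destruct (Hcv eps He) as [N1 HN1].
  assert (Hc1 : 0 < Rabs c + 1) by (pose proof (Rabs_pos c); lra).
  destruct (inv_small (eps / (Rabs c + 1))) as [N2 HN2].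
  { apply Rdiv_lt_0_compat; lra. }
  set (n := Nat.max N1 (S N2)).
  specialize (HN1 n ltac:(lia)). unfold R_dist in HN1. apply rabs_lt_inv in HN1.
  assert (Hn : INR N2 + 1 <= INR n) by (rewrite <- S_INR; apply le_INR; lia).
  assert (Hnp : 0 < INR n) by (pose proof (pos_INR N2); lra).
  assert (Hdiv : u n / INR n <= c / INR n + A).
  { replace (c / INR n + A) with ((c + INR n * A) / INR n) by (field; lra).
    unfold Rdiv. apply Rmult_le_compat_r; [left; apply Rinv_0_lt_compat; lra| apply Hu]. }
  assert (Hcn : c / INR n < eps).
  { unfold Rdiv. apply Rle_lt_trans with ((Rabs c + 1) * / (INR N2 + 1)).
    - apply Rle_trans with (Rabs c * / INR n).
      + apply Rmult_le_compat_r; [left; apply Rinv_0_lt_compat; lra| apply Rle_abs].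
      + apply Rmult_le_compat; [apply Rabs_pos| left; apply Rinv_0_lt_compat; lra| lra|].
        apply Rinv_le_contravar; [pose proof (pos_INR N2); lra| lra].
    - apply Rmult_lt_reg_l with (/ (Rabs c + 1)); [apply Rinv_0_lt_compat; lra|].
      rewrite <- Rmult_assoc, Rinv_l, Rmult_1_l by lra. unfold Rdiv in HN2. lra. }
  unfold eps in *. lra.
Qed.

Lemma lim_lower (u : nat -> R) L c A : Un_cv (fun n => u n / INR n) L ->
  (forall n, c + INR n * A <= u n) -> A <= L.
Proof.
  intros Hcv Hu.
  assert (Hcv' : Un_cv (fun n => (- u n) / INR n) (- L)).
  { intros eps He. destruct (Hcv eps He) as [N HN]. exists N. intros n Hn. specialize (HN n Hn).
    unfold R_dist in *. replace (- u n / INR n - - L) with (- (u n / INR n - L)) by (unfold Rdiv; ring).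
    rewrite Rabs_Ropp. exact HN. }
  pose proof (lim_upper (fun n => - u n) (- L) (- c) (- A) Hcv').
  assert (- L <= - A); [|lra]. apply H. intro n. specialize (Hu n). lra.
Qed.

Lemma birk_rot {d} (x : Config d) w : Birkhoff x -> RotationVector x w ->
  forall q m, Rabs (x (padd q m) - x q - dotRZ w m) <= 1.
Proof.
  intros HB HR q m. set (a := x (padd q m) - x q).
  assert (Hs : forall n, INR n * (a - 1) <= x (pscale n m) - x (pscale 0 m) <= INR n * (a + 1)).
  { induction n; [simpl; lra|]. rewrite pscale_S, S_INR.
    pose proof (birk_diff x HB m q (pscale n m)). pose proof (birk_diff x HB m (pscale n m) q).
    unfold a in *. lra. }
  pose proof (lim_upper (fun n => x (pscale n m)) (dotRZ w m) (x (pscale 0 m)) (a + 1) (HR m)) as Hup.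
  pose proof (lim_lower (fun n => x (pscale n m)) (dotRZ w m) (x (pscale 0 m)) (a - 1) (HR m)) as Hlo.
  assert (dotRZ w m <= a + 1) by (apply Hup; intro n; specialize (Hs n); lra).
  assert (a - 1 <= dotRZ w m) by (apply Hlo; intro n; specialize (Hs n); lra).
  apply Rabs_le. fold a. lra.
Qed.

Lemma list_min {A} (P : A -> R -> Prop) (L : list A) :
  (forall a c c', P a c -> 0 < c' <= c -> P a c') ->
  (forall a, In a L -> exists c, 0 < c /\ P a c) -> exists c, 0 < c /\ forall a, In a L -> P a c.
Proof.
  intros Hm H. induction L as [|a L IH].
  - exists 1. split; [lra| intros a []].
  - destruct (H a (or_introl eq_refl)) as [c1 [Hc1 HP1]].
    destruct (IH (fun b Hb => H b (or_intror Hb))) as [c2 [Hc2 HP2]].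
    exists (Rmin c1 c2). split; [apply Rmin_glb_lt; lra|].
    pose proof (Rmin_l c1 c2). pose proof (Rmin_r c1 c2).
    intros b [->|Hb]; [apply (Hm b c1)| apply (Hm b c2)]; auto; split; try apply Rmin_glb_lt; lra.
Qed.

Lemma list_nat_bound {A} (f : A -> R) (L : list A) : exists N : nat, (1 <= N)%nat /\ forall a, In a L -> f a <= INR N.
Proof.
  induction L as [|a L IH].
  - exists 1%nat. split; [lia| intros a []].
  - destruct IH as [N1 [HN1 H1]]. destruct (archimed (f a)) as [Ha _].
    exists (Nat.max N1 (Z.to_nat (up (f a)))). split; [lia|]. intros b [->|Hb].
    + apply Rle_trans with (INR (Z.to_nat (up (f b)))); [|apply le_INR; lia].
      destruct (Z_lt_le_dec (up (f b)) 0) as [Hneg|Hpos].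
      * replace (Z.to_nat (up (f b))) with 0%nat by lia. simpl. apply IZR_lt in Hneg. lra.
      * rewrite INR_IZR_INZ, Z2Nat.id by lia. lra.
    + apply Rle_trans with (INR N1); [auto| apply le_INR; lia].
Qed.

Section Main.
Context {d : nat} (r : R) (S : Pt d -> Config d -> R)
  (dS : Pt d -> Pt d -> Config d -> R) (ddS : Pt d -> Pt d -> Pt d -> Config d -> R)
  (HS : LocalPotentials r S dS ddS).

Lemma ddS_tau i k l x : ddS i i k x = ddS pzero pzero (psub k i) (tau i l x).
Proof.
  destruct HS as [Hr [HSloc [HdS [HddS [HddC [HB _]]]]]].
  assert (F1 : forall x, S i x = S pzero (tau i l x)).
  { intro z. rewrite HB, padd_zero_l. reflexivity. }
  assert (F2 : forall x, dS i i x = dS pzero pzero (tau i l x)).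
  { intro z. pose proof (partial_tau (S i) (S pzero) i l i (dS i i) (dS pzero (psub i i)) F1 (HdS _ _) (HdS _ _) z) as H.
    rewrite psub_diag in H. exact H. }
  exact (partial_tau (dS i i) (dS pzero pzero) i l k (ddS i i k) (ddS pzero pzero (psub k i)) F2 (HddS _ _ _) (HddS _ _ _) x).
Qed.

Lemma unif_neg (M : R) : exists c, 0 < c /\ forall e, norm1 (psub pzero e) = 1%Z ->
  forall z, (forall m, inBall r pzero m -> Rabs (z m) <= M) -> ddS pzero pzero e z <= - c.
Proof.
  destruct HS as [Hr [HSloc [HdS [HddS [HddC [HB [_ [_ [HDoff [HDnb _]]]]]]]]]].
  destruct (list_min (fun e c => norm1 (psub pzero e) = 1%Z ->
      forall z, (forall m, inBall r pzero m -> Rabs (z m) <= M) -> ddS pzero pzero e z <= - c)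
     (ball_enum 1 pzero)) as [c [Hc HP]].
  - intros e c c' H Hc' He z Hz. specialize (H He z Hz). lra.
  - intros e _. destruct (Z.eq_dec (norm1 (psub pzero e)) 1) as [He|He].
    + destruct (neg_bound (ball_enum r pzero) M (ddS pzero pzero e)) as [c [Hc HP]].
      * intros x eps Heps. destruct (HddC pzero pzero e x eps Heps) as [del [Hd Hdel]].
        exists del. split; auto. intros y Hy. apply Hdel. intros k Hk. apply Hy. apply ball_enum_spec. auto.
      * intro z. apply HDnb. exact He.
      * exists c. split; auto. intros _ z Hz. apply HP. intros m Hm. apply Hz. apply ball_enum_spec. auto.
    + exists 1. split; [lra|]. intro; contradiction.
  - exists c. split; auto. intros e He. apply HP; auto. apply ball_enum_spec. unfold inBall.
    rewrite norm1_sym, He. lra.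
Qed.

Lemma unif_neg_i (Bd : R) : exists c, 0 < c /\ forall i k xi, norm1 (psub i k) = 1%Z ->
  (forall m, inBall r i m -> Rabs (xi m - xi i) <= Bd) -> ddS i i k xi <= - c.
Proof.
  destruct (unif_neg (Bd + 1)) as [c [Hc HP]]. exists c. split; auto.
  intros i k xi Hik Hxi. set (l := (1 - up (xi i))%Z).
  rewrite (ddS_tau i k l). apply HP.
  - rewrite psub_zero_psub. exact Hik.
  - intros m Hm. unfold tau. destruct (archimed (xi i)) as [H1 H2].
    assert (inBall r i (padd m i)) as Hb.
    { unfold inBall in *. rewrite psub_padd_r. rewrite psub_zero_r in Hm. exact Hm. }
    specialize (Hxi _ Hb). apply rabs_le_inv in Hxi. apply Rabs_le.
    unfold l. rewrite minus_IZR. lra.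
Qed.
End Main.

Lemma Rdiv_le_0_compat a b : 0 <= a -> 0 < b -> 0 <= a / b.
Proof. intros. unfold Rdiv. apply Rmult_le_pos; [lra| left; apply Rinv_0_lt_compat; lra]. Qed.

Lemma conv_bound t a b B : 0 <= t <= 1 -> Rabs a <= B -> Rabs b <= B -> Rabs ((1 - t) * a + t * b) <= B.
Proof. intros Ht Ha Hb. apply rabs_le_inv in Ha. apply rabs_le_inv in Hb. apply Rabs_le. split; nra. Qed.

Section Nb.
Context {d : nat} (r : R) (S : Pt d -> Config d -> R)
  (dS : Pt d -> Pt d -> Config d -> R) (ddS : Pt d -> Pt d -> Pt d -> Config d -> R)
  (HS : LocalPotentials r S dS ddS).

Lemma neighbor (C c B1 : R) :
  (forall j i k x, Rabs (ddS j i k x) <= C) -> 0 < c ->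
  (forall i k xi, norm1 (psub i k) = 1%Z ->
     (forall m, inBall r i m -> Rabs (xi m - xi i) <= B1 + 2) -> ddS i i k xi <= - c) ->
  forall x y, Stationary r dS x -> Stationary r dS y -> cle x y ->
  (forall i m, inBall r i m -> Rabs (x m - x i) <= B1 /\ Rabs (y m - y i) <= B1) ->
  forall i k, norm1 (psub i k) = 1%Z ->
  c * (y k - x k) <= INR (length (ball_enum r (@pzero d))) * C * (y i - x i).
Proof.
  intros HC Hc Hneg x y Hx Hy Hxy Hloc i k Hik.
  destruct HS as [Hr [HSloc [HdS [HddS [HddC [HB [_ [_ [HDoff [HDnb _]]]]]]]]]].
  assert (Hki : k <> i) by (intro; subst; rewrite norm1_diag in Hik; discriminate).
  set (Lm := ball_enum (2 * r + 1) i). set (Lb := ball_enum r i).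
  assert (HLm : forall j q, inBall r i j -> inBall r j q -> In q Lm).
  { intros j q H1 H2. apply ball_enum_spec. unfold inBall in *.
    pose proof (norm1_tri q j i) as Ht. apply IZR_le in Ht. rewrite plus_IZR in Ht. lra. }
  assert (Hii : inBall r i i) by (unfold inBall; rewrite norm1_diag; lra).
  assert (HiLm : In i Lm) by (apply (HLm i i); auto).
  assert (HkLm : In k Lm).
  { apply ball_enum_spec. unfold inBall. rewrite norm1_sym, Hik. lra. }
  assert (HbLm : forall m, inBall r i m -> In m Lm) by (intros m Hm; apply (HLm i m); auto).
  destruct (list_nat_bound (fun m => y m - x m) Lm) as [N [HN1 HN]].
  assert (HNp : 0 < INR N) by (apply lt_0_INR; lia).
  set (Dl := fun q => (y q - x q) / INR N).
  set (zs := fun (s : nat) q => x q + INR s * Dl q).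
  set (w := fun j m => (if pt_eq_dec m i then C else 0) +
                       (if pt_eq_dec j i then (if pt_eq_dec m k then - c else 0) else 0)).
  assert (HDl0 : forall q, 0 <= Dl q).
  { intro q. unfold Dl. specialize (Hxy q). apply Rdiv_le_0_compat; lra. }
  assert (HDl1 : forall q, In q Lm -> Dl q <= 1).
  { intros q Hq. unfold Dl. specialize (HN q Hq). simpl in HN.
    apply Rmult_le_reg_r with (INR N); [lra|]. unfold Rdiv. rewrite Rmult_assoc, Rinv_l; lra. }
  assert (Hzstep : forall s q, zs (Datatypes.S s) q - zs s q = Dl q).
  { intros s q. unfold zs. rewrite S_INR. ring. }
  assert (Hcle : forall s, cle (zs s) (zs (Datatypes.S s))).
  { intros s q. pose proof (Hzstep s q). pose proof (HDl0 q). lra. }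
  assert (Hw : forall j n m xi, (n < N)%nat -> In m Lm -> cle (zs n) xi -> cle xi (zs (Datatypes.S n)) ->
            ddS j i m xi <= w j m).
  { intros j n m xi Hn Hm H1 H2. unfold w. destruct (pt_eq_dec m i) as [->|Hmi].
    - destruct (pt_eq_dec j i); [destruct (pt_eq_dec i k); [congruence|]|];
      specialize (HC j i i xi); apply rabs_le_inv in HC; lra.
    - destruct (pt_eq_dec j i) as [->|Hji]; [destruct (pt_eq_dec m k) as [->|Hmk]|].
      + assert (ddS i i k xi <= - c); [|lra]. apply Hneg; auto.
        intros m' Hm'. set (t := INR n / INR N).
        assert (Ht : 0 <= t <= 1).
        { unfold t. split; [apply Rdiv_le_0_compat; [apply pos_INR| lra]|].
          apply Rmult_le_reg_r with (INR N); [lra|]. unfold Rdiv. rewrite Rmult_assoc, Rinv_l by lra.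
          apply lt_INR in Hn. lra. }
        assert (Hz : forall q, zs n q = x q + t * (y q - x q)).
        { intro q. unfold zs, Dl, t. field. lra. }
        destruct (Hloc i m' Hm') as [Hxl Hyl].
        pose proof (conv_bound t (x m' - x i) (y m' - y i) B1 Ht Hxl Hyl) as Hcb.
        replace ((1 - t) * (x m' - x i) + t * (y m' - y i)) with (zs n m' - zs n i) in Hcb
          by (rewrite !Hz; ring).
        pose proof (H1 m') as A1. pose proof (H2 m') as A2. pose proof (H1 i) as A3. pose proof (H2 i) as A4.
        pose proof (Hzstep n m') as A5. pose proof (Hzstep n i) as A6.
        pose proof (HDl1 m' (HbLm m' Hm')) as A7. pose proof (HDl1 i HiLm) as A8.
        apply rabs_le_inv in Hcb. apply Rabs_le. lra.
      + specialize (HDoff i i m xi (not_eq_sym Hmi)). lra.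
      + specialize (HDoff j i m xi (not_eq_sym Hmi)). lra. }
  assert (Htel : forall j, In j Lb -> forall n, (n <= N)%nat ->
            dS j i (zs n) - dS j i (zs 0%nat) <= INR n * lsum (fun m => w j m * Dl m) Lm).
  { intros j Hj n. induction n as [|n IH]; intro Hn.
    - simpl. lra.
    - specialize (IH ltac:(lia)).
      assert (Hloc' : dS j i (zs (Datatypes.S n)) = dS j i (hyb Lm (zs n) (zs (Datatypes.S n)))).
      { apply (partial_local r j (S j) i (dS j i) (HSloc j) (HdS j i)). intros q Hq.
        unfold hyb. destruct (in_dec pt_eq_dec q Lm) as [_|Hn']; [reflexivity|].
        exfalso. apply Hn'. apply (HLm j q); auto. apply ball_enum_spec. exact Hj. }
      pose proof (mvt_list (dS j i) (ddS j i) (HddS j i) Lm (zs n) (zs (Datatypes.S n))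
          (fun m => w j m * Dl m) (ball_enum_nodup _ _) (Hcle n)) as Hm.
      assert (Hstep : dS j i (hyb Lm (zs n) (zs (Datatypes.S n))) - dS j i (zs n) <= lsum (fun m => w j m * Dl m) Lm).
      { apply Hm. intros m xi HmL H1 H2. rewrite Hzstep. apply Rmult_le_compat_r; [apply HDl0|].
        apply (Hw j n m xi); auto; lia. }
      rewrite S_INR. lra. }
  assert (HzN : zs N = y).
  { apply functional_extensionality; intro q. unfold zs, Dl. field. lra. }
  assert (Hz0 : zs 0%nat = x).
  { apply functional_extensionality; intro q. unfold zs. simpl. ring. }
  assert (Hj : forall j, In j Lb -> dS j i y - dS j i x <= lsum (fun m => w j m * (y m - x m)) Lm).
  { intros j Hj. specialize (Htel j Hj N (le_n N)). rewrite HzN, Hz0 in Htel.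
    rewrite <- lsum_scal in Htel.
    replace (lsum (fun m => w j m * (y m - x m)) Lm) with (lsum (fun a => INR N * (w j a * Dl a)) Lm); [exact Htel|].
    apply lsum_ext. intros m _. unfold Dl. field. lra. }
  assert (Hin : forall j, lsum (fun m => w j m * (y m - x m)) Lm =
                  C * (y i - x i) + (if pt_eq_dec j i then - c * (y k - x k) else 0)).
  { intro j. rewrite (lsum_ext _ (fun m => (if pt_eq_dec m i then C * (y i - x i) else 0) +
        (if pt_eq_dec m k then (if pt_eq_dec j i then - c * (y k - x k) else 0) else 0))).
    - rewrite lsum_plus, !lsum_ind; auto; apply ball_enum_nodup.
    - intros m _. unfold w. destruct (pt_eq_dec m i) as [e1|n1]; destruct (pt_eq_dec m k) as [e2|n2];
        destruct (pt_eq_dec j i) as [e3|n3]; try (exfalso; apply Hki; congruence);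
        try rewrite e1; try rewrite e2; ring. }
  assert (Hsx : lsum (fun j => dS j i x) Lb = 0).
  { apply Hx; [apply ball_enum_nodup| intro; apply ball_enum_spec]. }
  assert (Hsy : lsum (fun j => dS j i y) Lb = 0).
  { apply Hy; [apply ball_enum_nodup| intro; apply ball_enum_spec]. }
  assert (Hsum : lsum (fun j => dS j i y - dS j i x) Lb <=
                 lsum (fun j => C * (y i - x i) + (if pt_eq_dec j i then - c * (y k - x k) else 0)) Lb).
  { apply lsum_le. intros j Hjb. rewrite <- Hin. apply Hj; auto. }
  rewrite lsum_minus, Hsx, Hsy, lsum_plus, lsum_const, lsum_ind in Hsum;
    [| apply ball_enum_nodup | apply ball_enum_spec; auto].
  unfold Lb in Hsum. rewrite (ball_enum_length r i pzero) in Hsum. lra.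
Qed.
End Nb.

Lemma local_bound {d} (r : R) (x : Config d) w B : Birkhoff x -> RotationVector x w -> maxnorm w <= B -> 0 <= B ->
  forall i m, inBall r i m -> Rabs (x m - x i) <= 1 + B * r.
Proof.
  intros Hb Hr HB HB0 i m Hm. pose proof (birk_rot x w Hb Hr i (psub m i)) as H.
  rewrite padd_psub_l in H. pose proof (dotRZ_bound w (psub m i)) as H2.
  pose proof (norm1_nonneg (psub m i)) as Hn. apply IZR_le in Hn. unfold inBall in Hm.
  pose proof (maxnorm_nonneg w).
  assert (maxnorm w * IZR (norm1 (psub m i)) <= B * r).
  { apply Rle_trans with (B * IZR (norm1 (psub m i))); [apply Rmult_le_compat_r; lra|].
    apply Rmult_le_compat_l; lra. }
  apply rabs_le_inv in H. apply rabs_le_inv in H2. apply Rabs_le. lra.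
Qed.

Theorem mainTheorem8 (d : nat) (r : R) (S : Pt d -> Config d -> R)
    (dS : Pt d -> Pt d -> Config d -> R) (ddS : Pt d -> Pt d -> Pt d -> Config d -> R)
    (HS : LocalPotentials r S dS ddS)
    (K : Vector.t R d -> Prop) (HK : CompactRd K) :
  exists delta : nat -> R, (forall n, 0 < delta n) /\
    forall x y : Config d,
      Birkhoff x -> Birkhoff y ->
      (exists w, K w /\ RotationVector x w) ->
      (exists w, K w /\ RotationVector y w) ->
      Stationary r dS x -> Stationary r dS y ->
      clt x y ->
      (forall i k : Pt d,
         y k - x k <= delta (Z.to_nat (norm1 (psub i k))) * (y i - x i)) /\
      cll x y.
Proof.
  pose proof HS as HS'.
  destruct HS' as [Hr [_ [_ [_ [_ [_ [_ [_ [_ [_ [C HC]]]]]]]]]]].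
  destruct (K_bounded K HK) as [B [HB0 HBK]].
  set (B1 := 1 + B * r).
  destruct (unif_neg_i r S dS ddS HS (B1 + 2)) as [c [Hc Hneg]].
  set (A0 := INR (length (ball_enum r (@pzero d)))).
  assert (HC0 : 0 <= C) by (pose proof (HC pzero pzero pzero (fun _ => 0)); pose proof (Rabs_pos (ddS pzero pzero pzero (fun _ => 0))); lra).
  assert (HA0 : 0 <= A0) by apply pos_INR.
  set (D := (A0 * C + 1) / c).
  assert (HD : 0 < D) by (unfold D; apply Rdiv_lt_0_compat; [pose proof (Rmult_le_pos _ _ HA0 HC0)|]; lra).
  exists (fun n => D ^ n). split; [intro n; apply pow_lt; exact HD|].
  intros x y Bx By [wx [Kx Rx]] [wy [Ky Ry]] Sx Sy [Hxy Hne].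
  assert (Hloc : forall i m, inBall r i m -> Rabs (x m - x i) <= B1 /\ Rabs (y m - y i) <= B1).
  { intros i m Hm. split; [apply (local_bound r x wx B)| apply (local_bound r y wy B)]; auto. }
  pose proof (neighbor r S dS ddS HS C c B1 HC Hc Hneg x y Sx Sy Hxy Hloc) as Hnb.
  assert (Hnb' : forall i k, norm1 (psub i k) = 1%Z -> y k - x k <= D * (y i - x i)).
  { intros i k Hik. specialize (Hnb i k Hik). fold A0 in Hnb. pose proof (Hxy i).
    apply Rmult_le_reg_l with c; [lra|].
    replace (c * (D * (y i - x i))) with ((A0 * C + 1) * (y i - x i)) by (unfold D; field; lra).
    lra. }
  assert (Hpath : forall n i k, norm1 (psub i k) = Z.of_nat n -> y k - x k <= D ^ n * (y i - x i)).
  { induction n as [|n IH]; intros i k Hn.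
    - apply norm1_zero_eq in Hn. subst. simpl. lra.
    - destruct (norm1_step i k n Hn) as [i' [H1 H2]].
      specialize (IH i' k H2). specialize (Hnb' i i' H1).
      simpl. pose proof (pow_lt D n HD).
      apply Rle_trans with (D ^ n * (y i' - x i')); [exact IH|].
      replace (D * D ^ n * (y i - x i)) with (D ^ n * (D * (y i - x i))) by ring.
      apply Rmult_le_compat_l; lra. }
  assert (Hall : forall i k, y k - x k <= D ^ (Z.to_nat (norm1 (psub i k))) * (y i - x i)).
  { intros i k. apply Hpath. rewrite Z2Nat.id; [reflexivity| apply norm1_nonneg]. }
  split; [exact Hall|].
  intro i. destruct (Rlt_dec (x i) (y i)) as [H|H]; [exact H|].
  exfalso. apply Hne. apply functional_extensionality. intro k.
  specialize (Hall i k). pose proof (Hxy i). pose proof (Hxy k).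
  assert (y i - x i = 0) as E by lra. rewrite E, Rmult_0_r in Hall. lra.
Qed.
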